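(* Let $S$ be a closed type of system $\mathcal{F}$ which is $\forall^+$ (a type with positive quantifiers) and does not contain the type constant $O$. Then $S$ is an output type: for every normal $\lambda$-term $t$ and every term variable $\alpha$, if $\alpha : O \vdash_{\mathcal F} t : S$, then $\alpha \notin Fv(t)$.
   Context: $\lambda$-terms are those of the untyped $\lambda$-calculus; $(t)u$ denotes application, $Fv(t)$ the set of free variables of $t$, and a term is normal if it contains no $\beta$-redex. Types of system $\mathcal F$ are built from type variables and type constants (atomic types on which one cannot quantify; $O$ is such a constant) with the connectives $\rightarrow$ and $\forall$; only proper types are considered, i.e. in every subformula $\forall X A$ the variable $X$ occurs free in $A$. A type is closed if it has no free type variable. A context is $\Gamma = x_1:A_1,\dots,x_n:A_n$. The judgement $\Gamma \vdash_{\mathcal F} t : A$ is generated by: (ax) $\Gamma \vdash x_i : A_i$; ($\rightarrow_i$) from $\Gamma, x:B \vdash t : C$ infer $\Gamma \vdash \lambda x t : B \rightarrow C$; ($\rightarrow_e$) from $\Gamma \vdash u : B\rightarrow C$ and $\Gamma \vdash v : B$ infer $\Gamma \vdash (u)v : C$; ($\forall_i$) from $\Gamma \vdash t : A$ with $X$ not free in $\Gamma$ infer $\Gamma \vdash t : \forall X A$; ($\forall_e$) from $\Gamma \vdash t : \forall X A$ infer $\Gamma \vdash t : A[C/X]$ for any type $C$. The classes $\forall^+$ and $\forall^-$ are defined by: every type variable is both $\forall^+$ and $\forall^-$; if $A$ is $\forall^+$ (resp. $\forall^-$) and $B$ is $\forall^-$ (resp. $\forall^+$) then $B\rightarrow A$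 is $\forall^+$ (resp. $\forall^-$); if $A$ is $\forall^+$ and $X$ is free in $A$ then $\forall X A$ is $\forall^+$. *)

(* Defs.v *)
From Stdlib Require Import Arith List.
Import ListNotations.

(** Type variables use de Bruijn indices ([TVar n]); [All A] binds index 0 in [A].
    Type constants are named by natural numbers ([TCst c]); constants cannot be
    quantified over. *)
Inductive ty : Type :=
| TVar : nat -> ty
| TCst : nat -> ty
| Arr  : ty -> ty -> ty
| All  : ty -> ty.

Definition O_cst : nat := 0.
Definition O : ty := TCst O_cst.

Fixpoint shift (c : nat) (A : ty) : ty :=
  match A with
  | TVar n => if n <? c then TVar n else TVar (S n)
  | TCst k => TCst k
  | Arr B C => Arr (shift c B) (shift c C)
  | All B => All (shift (S c) B)
  end.

(** Capture-avoiding substitution of C for the variable j (variables above j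
    are decremented, since the binder of j disappears). [subst 0 C A] is A[C/X]
    when [All A] is [forall X A]. *)
Fixpoint subst (j : nat) (C : ty) (A : ty) : ty :=
  match A with
  | TVar n => if n =? j then C else if n <? j then TVar n else TVar (pred n)
  | TCst k => TCst k
  | Arr B D => Arr (subst j C B) (subst j C D)
  | All B => All (subst (S j) (shift 0 C) B)
  end.

Fixpoint occurs_free (n : nat) (A : ty) : Prop :=
  match A with
  | TVar m => m = n
  | TCst _ => False
  | Arr B C => occurs_free n B \/ occurs_free n C
  | All B => occurs_free (S n) B
  end.

Definition closed_ty (A : ty) : Prop := forall n, ~ occurs_free n A.

Fixpoint proper (A : ty) : Prop :=
  match A with
  | TVar _ | TCst _ => True
  | Arr B C => proper B /\ proper C
  | All B => occurs_free 0 B /\ proper B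
  end.

Fixpoint contains_cst (c : nat) (A : ty) : Prop :=
  match A with
  | TVar _ => False
  | TCst k => k = c
  | Arr B C => contains_cst c B \/ contains_cst c C
  | All B => contains_cst c B
  end.

Inductive pos : ty -> Prop :=
| pos_var : forall n, pos (TVar n)
| pos_cst : forall c, pos (TCst c)
| pos_arr : forall B A, neg B -> pos A -> pos (Arr B A)
| pos_all : forall A, pos A -> occurs_free 0 A -> pos (All A)
with neg : ty -> Prop :=
| neg_var : forall n, neg (TVar n)
| neg_cst : forall c, neg (TCst c)
| neg_arr : forall B A, pos B -> neg A -> neg (Arr B A).

Inductive term : Type :=
| Var : nat -> term
| Lam : nat -> term -> term
| App : term -> term -> term.   (* App t u = (t)u *)

Fixpoint free_in (x : nat) (t : term) : Prop :=
  match t with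
  | Var y => x = y
  | Lam y u => x <> y /\ free_in x u
  | App u v => free_in x u \/ free_in x v
  end.

Fixpoint normal (t : term) : Prop :=
  match t with
  | Var _ => True
  | Lam _ u => normal u
  | App u v =>
      match u with Lam _ _ => False | _ => True end /\ normal u /\ normal v
  end.

Definition ctx := list (nat * ty).

Fixpoint lookup (G : ctx) (x : nat) : option ty :=
  match G with
  | [] => None
  | (y, A) :: G' => if x =? y then Some A else lookup G' x
  end.

(** Shifting all types of the context (de Bruijn form of "X not free in Gamma"). *)
Definition shift_ctx (G : ctx) : ctx := map (fun p => (fst p, shift 0 (snd p))) G.

Inductive typing : ctx -> term -> ty -> Prop :=
| t_ax : forall G x A, lookup G x = Some A -> typing G (Var x) A
| t_abs : forall G x t B C,
    proper B -> typing ((x, B) :: G) t C -> typing G (Lam x t) (Arr B C)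
| t_app : forall G u v B C,
    typing G u (Arr B C) -> typing G v B -> typing G (App u v) C
| t_gen : forall G t A,
    occurs_free 0 A -> typing (shift_ctx G) t A -> typing G t (All A)
| t_inst : forall G t A C,
    proper C -> typing G t (All A) -> typing G t (subst 0 C A).

(* Main.v *)
Require Import Defs.
From Stdlib Require Import List Arith Lia.
Import ListNotations.

Fixpoint pn (b : bool) (A : ty) : Prop :=
  match A with
  | TVar _ | TCst _ => True
  | Arr B C => pn (negb b) B /\ pn b C
  | All B => if b then pn b B else False
  end.

Lemma pos_neg_pn : forall A, (pos A -> pn true A) /\ (neg A -> pn false A).
Proof.
  induction A as [n|c|B IHB C IHC|B IHB]; simpl; split; intro H; auto;
    inversion H; subst; firstorder.
Qed.

Lemma pn_subst : forall A b j C, pn b (subst j C A) -> pn b A.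
Proof.
  induction A as [n|c|B IHB D IHD|B IHB]; simpl; intros b j C H; auto.
  - destruct H; split; eauto.
  - destruct b; eauto.
Qed.

Lemma pn_shift : forall A b c, pn b A -> pn b (shift c A).
Proof.
  induction A as [n|c|B IHB D IHD|B IHB]; simpl; intros b k H; auto.
  - destruct (n <? k); simpl; auto.
  - destruct H; split; eauto.
  - destruct b; eauto.
Qed.

Lemma contains_subst : forall A k j C, contains_cst k A -> contains_cst k (subst j C A).
Proof.
  induction A as [n|c|B IHB D IHD|B IHB]; simpl; intros k j C H; auto.
  - contradiction.
  - destruct H; eauto.
Qed.

Lemma contains_shift : forall A k c, contains_cst k (shift c A) -> contains_cst k A.
Proof.
  induction A as [n|c|B IHB D IHD|B IHB]; simpl; intros k j H; auto.
  - destruct (n <? j); simpl in H; auto.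
  - destruct H; eauto.
  - eauto.
Qed.

Lemma not_occ_shift : forall A c, ~ occurs_free c (shift c A).
Proof.
  induction A as [n|k|B IHB D IHD|B IHB]; simpl; intros c H; auto.
  - destruct (n <? c) eqn:E; simpl in H.
    + apply Nat.ltb_lt in E. subst. lia.
    + apply Nat.ltb_ge in E. subst. lia.
  - destruct H; [eapply IHB|eapply IHD]; eauto.
  - eapply IHB; eauto.
Qed.

Fixpoint rsuf (A D : ty) : Prop :=
  A = D \/ match D with Arr _ D2 => rsuf A D2 | _ => False end.

Lemma rsuf_occ : forall D A n, rsuf A D -> occurs_free n A -> occurs_free n D.
Proof.
  induction D; simpl; intros A m [H|H] Ho; subst; auto; try contradiction.
  right; eauto.
Qed.

Lemma rsuf_pn : forall D A, rsuf A D -> pn false D -> pn false A.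
Proof.
  induction D; simpl; intros A [H|H] Hp; subst; auto; try contradiction.
  destruct Hp; eauto.
Qed.

Lemma rsuf_cont : forall D A k, rsuf A D -> contains_cst k A -> contains_cst k D.
Proof.
  induction D; simpl; intros A k [H|H] Hc; subst; auto; try contradiction.
  right; eauto.
Qed.

Lemma rsuf_refl : forall D, rsuf D D.
Proof. destruct D; simpl; left; reflexivity. Qed.

Lemma rsuf_arr : forall D B C, rsuf (Arr B C) D -> rsuf C D.
Proof.
  induction D as [n|k|D1 IH1 D2 IH2|D1 IH1]; intros B C H; simpl in H |- *;
    destruct H as [H|H]; try contradiction; try discriminate.
  - inversion H; subst. right. apply rsuf_refl.
  - right; eauto.
Qed.

Definition rsufo A (o : option ty) : Prop :=
  match o with Some D => rsuf A D | None => False end.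

Lemma lookup_shift : forall G x,
  lookup (shift_ctx G) x = option_map (shift 0) (lookup G x).
Proof.
  induction G as [|[y B] G IH]; simpl; intros x; auto.
  destruct (x =? y); simpl; auto.
Qed.

Fixpoint head (t : term) : nat :=
  match t with Var x => x | Lam _ u => head u | App u _ => head u end.

Definition notLam (t : term) : Prop :=
  match t with Lam _ _ => False | _ => True end.

Definition Inv (alpha : nat) (G : ctx) : Prop :=
  lookup G alpha = Some O /\
  forall x D, lookup G x = Some D -> pn false D /\ (x <> alpha -> ~ contains_cst O_cst D).

Lemma Inv_shift : forall alpha G, Inv alpha G -> Inv alpha (shift_ctx G).
Proof.
  intros alpha G [H1 H2]; split.
  - rewrite lookup_shift, H1; reflexivity.
  - intros x D H. rewrite lookup_shift in H.
    destruct (lookup G x) eqn:E; simpl in H; inversion H; subst.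
    destruct (H2 x t E) as [Ha Hb]; split.
    + apply pn_shift; auto.
    + intros Hx Hc. apply (Hb Hx). eapply contains_shift; eauto.
Qed.

Lemma big : forall alpha G t A, typing G t A -> normal t -> Inv alpha G ->
  (pn true A -> ~ contains_cst O_cst A -> ~ free_in alpha t) /\
  (notLam t -> rsufo A (lookup G (head t)) /\ (head t <> alpha -> ~ free_in alpha t)).
Proof.
  intros alpha G t A Hty. induction Hty as [G x A Hl|G x t B C Hp Ht IH|G u v B C Hu IHu Hv IHv|G t A Ho Ht IH|G t A C Hp Ht IH];
    intros Hn HI.
  - split.
    + intros _ Hc Hf. simpl in Hf; subst. destruct HI as [H1 _].
      rewrite H1 in Hl; inversion Hl; subst. apply Hc. reflexivity.
    + intros _. simpl. rewrite Hl. split; [apply rsuf_refl|]. intros H Hf; apply H; auto.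
  - split; [|simpl; tauto].
    intros [HB HC] Hc Hf. simpl in Hf, Hn. destruct Hf as [Hx Hf].
    assert (HI' : Inv alpha ((x, B) :: G)).
    { destruct HI as [H1 H2]; split.
      - simpl. destruct (alpha =? x) eqn:E; [apply Nat.eqb_eq in E; congruence|auto].
      - intros y D. simpl. destruct (y =? x) eqn:E.
        + intros H; inversion H; subst. split; auto. intros _ Hc'. apply Hc. simpl; auto.
        + apply H2. }
    destruct (IH Hn HI') as [P1 _]. apply (P1 HC); auto. intro; apply Hc; simpl; auto.
  - simpl in Hn. destruct Hn as [Hnl [Hnu Hnv]].
    assert (NL : notLam u) by (destruct u; simpl; auto).
    destruct (IHu Hnu HI) as [_ P2]. destruct (P2 NL) as [Hr Hfu].
    destruct (Nat.eq_dec (head u) alpha) as [E|E].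
    { exfalso. destruct HI as [H1 _]. rewrite E, H1 in Hr. simpl in Hr.
      destruct Hr as [Hr|Hr]; [discriminate|contradiction]. }
    destruct (lookup G (head u)) as [D|] eqn:El; [|contradiction].
    destruct HI as [H1 H2]. destruct (H2 _ _ El) as [HpD HcD].
    pose proof (rsuf_pn _ _ Hr HpD) as [HpB _]. simpl in HpB.
    assert (HcB : ~ contains_cst O_cst B).
    { intro Hc. apply (HcD E). eapply rsuf_cont; eauto. simpl; auto. }
    destruct (IHv Hnv (conj H1 H2)) as [P1v _].
    assert (Hf : ~ free_in alpha (App u v)).
    { simpl. intros [Hf|Hf]; [apply (Hfu E Hf)|apply (P1v HpB HcB Hf)]. }
    split; [intros; exact Hf|]. intros _. simpl. rewrite El. split; [eapply rsuf_arr; eauto|].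
    intros; exact Hf.
  - destruct (IH Hn (Inv_shift _ _ HI)) as [P1 P2]. split.
    + intros Hp Hc. apply P1; auto.
    + intros NL. exfalso. destruct (P2 NL) as [Hr _].
      rewrite lookup_shift in Hr. destruct (lookup G (head t)); simpl in Hr; [|contradiction].
      eapply not_occ_shift. eapply rsuf_occ; eauto.
  - destruct (IH Hn HI) as [P1 P2]. split.
    + intros Hp2 Hc. apply P1.
      * simpl. eapply pn_subst; eauto.
      * intro H; apply Hc. apply contains_subst; auto.
    + intros NL. exfalso. destruct (P2 NL) as [Hr _].
      destruct (lookup G (head t)) eqn:El; simpl in Hr; [|contradiction].
      destruct HI as [_ H2]. destruct (H2 _ _ El) as [HpD _].
      pose proof (rsuf_pn _ _ Hr HpD). simpl in H; auto.
Qed.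

Theorem theorem2p1p7 :
  forall S : ty,
    closed_ty S -> proper S -> pos S -> ~ contains_cst O_cst S ->
    forall (t : term) (alpha : nat),
      normal t -> typing [(alpha, O)] t S -> ~ free_in alpha t.
Proof.
  intros S _ _ Hpos Hc t alpha Hn Ht.
  assert (HI : Inv alpha [(alpha, O)]).
  { split.
    - simpl. rewrite Nat.eqb_refl. reflexivity.
    - intros x D. simpl. destruct (x =? alpha) eqn:E; [|discriminate].
      intros H; inversion H; subst. apply Nat.eqb_eq in E. split; simpl; auto. }
  destruct (big alpha _ _ _ Ht Hn HI) as [P1 _].
  apply P1; auto. apply (proj1 (pos_neg_pn S)); auto.
Qed.
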